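(* For every integer $N\ge 0$, let $T_{1\times 4}(6,N)$ be the number of tilings of a $6\times n$ rectangle, $n=2N/3$, by $N$ tiles of size $1\times 4$ (and $0$ if $2N/3\notin\mathbb{Z}$). Then, as formal power series, \[ \sum_{N\ge 0} T_{1\times 4}(6,N)\,z^N=\frac{(1-z^6)^3}{1-7z^6+6z^{12}-4z^{18}+z^{24}}. \]
   Context: A tiling of an $m\times n$ rectangle (width $m$, length $n$, made of $mn$ unit squares) by $a\times b$ tiles is a partition of the rectangle into non-overlapping axis-parallel $a\times b$ rectangles with integer corner coordinates, each placed in either of its two orientations. Tilings related by reflections or rotations of the rectangle are counted as distinct. The empty tiling counts once for $N=0$. *)

(* Defs.v *)
From HB Require Import structures.
From mathcomp Require Import all_boot all_order all_algebra.
Set Implicit Arguments. Unset Strict Implicit. Unset Printing Implicit Defensive.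
Import Order.TTheory GRing.Theory Num.Theory.

Definition cell (m n : nat) := ('I_m * 'I_n)%type.

Definition block (m n : nat) (i j h w : nat) : {set cell m n} :=
  [set c : cell m n | (i <= c.1 < i + h) && (j <= c.2 < j + w)].

Definition is_tile (a b m n : nat) (S : {set cell m n}) : bool :=
  [exists i : 'I_m, exists j : 'I_n,
     ((i + a <= m) && (j + b <= n) && (S == @block m n i j a b)) ||
     ((i + b <= m) && (j + a <= n) && (S == @block m n i j b a))].

Definition is_tiling (a b m n : nat) (P : {set {set cell m n}}) : bool :=
  partition P [set: cell m n] && [forall S in P, is_tile a b S].

Definition ntilings (a b m n N : nat) : nat :=
  #|[set P : {set {set cell m n}} | is_tiling a b P && (#|P| == N)]|.

Definition T14_6 (N : nat) : nat :=
  if 3 %| N.*2 then ntilings 1 4 6 (N.*2 %/ 3) N else 0.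

Local Open Scope ring_scope.

Definition numer : {poly int} := (1 - 'X^6) ^+ 3.
Definition denom : {poly int} := 1 - 7%:P * 'X^6 + 6%:P * 'X^12 - 4%:P * 'X^18 + 'X^24.

(* Main.v *)
From HB Require Import structures.
Require Import Defs.
From mathcomp Require Import all_boot all_order all_algebra.
From mathcomp Require Import zify ring lra.
Set Implicit Arguments. Unset Strict Implicit. Unset Printing Implicit Defensive.

Section Gen.
Variable T : finType.
Variable tile : pred {set T}.
Hypothesis tile_n0 : forall S, tile S -> S != set0.

Definition Til (R : {set T}) : {set {set {set T}}} :=
  [set P : {set {set T}} | partition P R && [forall S in P, tile S]].

Lemma Til0 : #|Til set0| = 1.
Proof.
rewrite -(cards1 (set0 : {set {set T}})); apply: eq_card => P.
rewrite !inE partition_set0; apply/andP/eqP => [[/eqP//]|->]; split=> //.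
by apply/forall_inP => S; rewrite inE.
Qed.

Lemma til_rec (R : {set T}) c : c \in R ->
  #|Til R| = \sum_(S : {set T} | tile S && (c \in S) && (S \subset R)) #|Til (R :\: S)|.
Proof.
move=> cR.
rewrite -sum1_card.
rewrite (partition_big (fun P => pblock P c) (fun S : {set T} => tile S && (c \in S) && (S \subset R))).
  apply: eq_bigr => S /andP[/andP[tS cS] SR].
  have S0 : S != set0 by exact: tile_n0.
  rewrite sum1_card.
  transitivity #|(fun P => S |: P) @: Til (R :\: S)|.
    apply: eq_card => P /=; apply/andP/imsetP.
    - case; rewrite [P \in _]inE => /andP[pP /forall_inP tP] /eqP pbS.
      have cc : c \in cover P by rewrite (cover_partition pP).
      have SP : S \in P by rewrite -pbS pblock_mem.
      exists (P :\ S); last by rewrite setD1K.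
      rewrite inE partitionD1 //=; apply/forall_inP => B; rewrite inE => /andP[_ BP].
      exact: tP.
    - case=> P' ; rewrite inE => /andP[pP' /forall_inP tP'] ->.
      have dS : [disjoint S & R :\: S].
        by rewrite -setI_eq0; apply/eqP/setP => x; rewrite !inE; case: (x \in S); rewrite ?andbF.
      have pU := partitionU1 pP' S0 dS.
      have eR : S :|: (R :\: S) = R.
        apply/setP => x; rewrite !inE; case xS: (x \in S) => //=.
        by rewrite (subsetP SR).
      rewrite eR in pU.
      split; first rewrite [_ \in Til R]inE pU /=.
        apply/forall_inP => B; rewrite !inE => /orP[/eqP->//|]; exact: tP'.
      apply/eqP; apply: def_pblock => //; [exact: partition_trivIset pU | by rewrite setU11].
  rewrite card_in_imset // => P1 P2; rewrite !inE => /andP[p1 _] /andP[p2 _] e.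
  have nS : forall P, partition P (R :\: S) -> S \notin P.
    move=> P pP; apply/negP => SP.
    have := partitionS pP SP.
    case/set0Pn: S0 => x xS /subsetP/(_ x xS); rewrite inE xS //.
  by rewrite -(setU1K (nS _ p1)) e setU1K // nS.
move=> P; rewrite inE => /andP[pP /forall_inP tP].
have cc : c \in cover P by rewrite (cover_partition pP).
rewrite mem_pblock cc andbT tP ?pblock_mem // (partitionS pP) // pblock_mem //.
Qed.
End Gen.

Definition LH (r : nat) := [seq r + 6 * o | o <- iota 0 4].
Definition LV (r : nat) := [seq r + i | i <- iota 0 4].
Definition setc (O : seq bool) (L : seq nat) :=
  mkseq (fun i => nth false O i || (i \in L)) (maxn (size O) 24).
Definition okH O r := all (fun i => ~~ nth false O i) (LH r).
Definition okV O r := (r + 4 <= 6) && all (fun i => ~~ nth false O i) (LV r).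

Fixpoint pl (k : nat) (h : bool) (O : seq bool) : seq (seq bool) :=
  match k with
  | 0 => [:: O]
  | k'.+1 => let r := 6 - k'.+1 in
     if nth false O r then pl k' h O else
     (if h && okH O r then pl k' h (setc O (LH r)) else [::]) ++
     (if okV O r then pl k' h (setc O (LV r)) else [::])
  end.

Definition step h O := map (drop 6) (pl 6 h O).

Fixpoint g (k : nat) (O : seq bool) : nat :=
  match k with
  | 0 => 1
  | k'.+1 => sumn (map (g k') (step (4 <= k'.+1) O))
  end.

Lemma nth_setc O L i : all (fun x => x < 24) L ->
  nth false (setc O L) i = nth false O i || (i \in L).
Proof.
move=> aL; rewrite /setc; case: (ltnP i (maxn (size O) 24)) => hi.
  by rewrite nth_mkseq.
rewrite nth_default ?size_mkseq // nth_default; last by rewrite (leq_trans _ hi) // leq_maxl.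
apply/esym/negP => iL; move/allP: aL => /(_ _ iL).
by rewrite ltnNge (leq_trans _ hi) // leq_maxr.
Qed.

Lemma allLH r : r < 6 -> all (fun x => x < 24) (LH r).
Proof. move=> hr; apply/allP => x /mapP[o]; rewrite mem_iota => /andP[_ ho] ->; lia. Qed.
Lemma allLV r : r < 6 -> all (fun x => x < 24) (LV r).
Proof. move=> hr; apply/allP => x /mapP[o]; rewrite mem_iota => /andP[_ ho] ->; lia. Qed.

Lemma memLH a d r : a < 6 -> r < 6 -> (a + 6 * d \in LH r) = (a == r) && (d < 4).
Proof.
move=> ha hr; apply/mapP/andP => [[o]|[/eqP -> hd]].
  rewrite mem_iota => /andP[_ ho] e; split; [apply/eqP|]; lia.
by exists d; rewrite // mem_iota.
Qed.

Lemma memLV a d r : a < 6 -> r + 4 <= 6 -> (a + 6 * d \in LV r) = (d == 0) && (r <= a < r + 4).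
Proof.
move=> ha hr; apply/mapP/andP => [[o]|[/eqP -> /andP[h1 h2]]].
  rewrite mem_iota => /andP[_ ho] e; split; [apply/eqP|apply/andP;split]; lia.
by exists (a - r); rewrite ?mem_iota; lia.
Qed.

Section Rect.
Variable n : nat.
Notation C := (cell 6 n).
Definition tl : pred {set C} := fun S => is_tile 1 4 S.

Lemma tl_n0 S : tl S -> S != set0.
Proof.
rewrite /tl /is_tile => /existsP[i /existsP[j /orP[/andP[/andP[hi hj] /eqP->]|/andP[/andP[hi hj] /eqP->]]]].
  have hj' : j < n by lia.
  apply/set0Pn; exists (i, Ordinal hj'); rewrite inE /=; lia.
have hj' : j < n by lia.
apply/set0Pn; exists (i, Ordinal hj'); rewrite inE /=; lia.
Qed.

Definition reg (j : nat) (O : seq bool) : {set C} :=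
  [set c : C | (j <= c.2) && ~~ nth false O (c.1 + 6 * (c.2 - j))].

Lemma reg_shift j O : (forall i, i < 6 -> nth false O i) ->
  reg j O = reg j.+1 (drop 6 O).
Proof.
move=> hO; apply/setP => c; rewrite !inE nth_drop.
case: (ltngtP j c.2) => h /=.
- by have -> : 6 + (c.1 + 6 * (c.2 - j.+1)) = c.1 + 6 * (c.2 - j) by lia.
- by [].
- by rewrite -h subnn muln0 addn0 hO.
Qed.

Lemma sum2 (F : {set C} -> nat) (P : pred {set C}) (A B : {set C}) (x y : bool) :
  (x -> y -> A != B) ->
  (forall S, P S = ((S == A) && x) || ((S == B) && y)) ->
  \sum_(S | P S) F S = (if x then F A else 0) + (if y then F B else 0).
Proof.
move=> hAB hP; case: x y hAB hP => [] [] hAB hP.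
- rewrite (bigD1 A) ?hP ?eqxx //= (big_pred1 B) // => S /=.
  rewrite hP !andbT; case: (S =P A) => [->|_] /=; last by rewrite ?orbF ?andbT.
  by apply/esym/negbTE; exact: hAB.
- by rewrite addn0; apply: big_pred1 => S; rewrite hP !andbT andbF orbF.
- by rewrite add0n; apply: big_pred1 => S; rewrite hP !andbT andbF.
- by rewrite big_pred0 // => S; rewrite hP !andbF.
Qed.

Lemma corner (S : {set C}) i j' h w j O r (hr : r < 6) (hj : j < n) :
  0 < h -> 0 < w -> (forall i, i < r -> nth false O i) ->
  S = @block 6 n i j' h w -> (Ordinal hr, Ordinal hj) \in S -> S \subset reg j O ->
  i = r /\ j' = j.
Proof.
move=> h0 w0 hO -> cS SR; move: cS; rewrite inE /= => /andP[/andP[i1 i2] /andP[j1 j2]].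
have hi : i < 6 by lia.
have hj' : j' < n by lia.
have /(subsetP SR) : ((Ordinal hi, Ordinal hj') : C) \in @block 6 n i j' h w by rewrite inE /=; lia.
rewrite inE /= => /andP[jj nO].
have ej : j' = j by lia.
split=> //; move: nO; rewrite ej subnn muln0 addn0.
case: (ltngtP i r) => // hir; [by rewrite hO | lia].
Qed.

Lemma plA k j O : j < n -> k <= 6 -> (forall i, i < 6 - k -> nth false O i) ->
  #|Til tl (reg j O)| =
  sumn [seq #|Til tl (reg j.+1 (drop 6 O'))| | O' <- pl k (4 <= n - j) O].
Proof.
elim: k O => [|k IH] O hj hk hO /=.
  by rewrite addn0 (@reg_shift j O hO).
set r := 6 - k.+1.
have hr : r < 6 by rewrite /r; lia.
case: ifP => hr0.
  apply: IH => //; first lia.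
  move=> i hi; case: (ltngtP i r) => hir; [apply: hO; rewrite -/r // | lia | by rewrite hir].
rewrite map_cat sumn_cat.
have hO' : forall i, i < r -> nth false O i by move=> i; apply: hO.
pose c : C := (Ordinal hr, Ordinal hj).
have cR : c \in reg j O by rewrite inE /= leqnn subnn muln0 addn0 hr0.
rewrite (til_rec tl_n0 cR).
pose BH := @block 6 n r j 1 4.
pose BV := @block 6 n r j 4 1.
have key : forall S, (tl S && (c \in S) && (S \subset reg j O)) =
   ((S == BH) && ((4 <= n - j) && okH O r)) || ((S == BV) && okV O r).
  move=> S; apply/idP/idP.
  - move=> /andP[/andP[tS cS] SR].
    move: tS; rewrite /tl /is_tile => /existsP[i /existsP[j' /orP[/andP[/andP[hi hj'] /eqP eS]|/andP[/andP[hi hj'] /eqP eS]]]].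
      have [ei ej] := @corner S i j' 1 4 j O r hr hj isT isT hO' eS cS SR.
      apply/orP; left; rewrite eS ei ej /BH eqxx /=.
      apply/andP; split; first lia.
      apply/allP => x /mapP[o]; rewrite mem_iota => /andP[_ ho] ->.
      have ho' : j + o < n by lia.
      have /(subsetP SR) : ((Ordinal hr, Ordinal ho') : C) \in S by rewrite eS inE /= ei ej; lia.
      by rewrite inE /= addKn => /andP[].
    have [ei ej] := @corner S i j' 4 1 j O r hr hj isT isT hO' eS cS SR.
    apply/orP; right; rewrite eS ei ej /BV eqxx /=.
    apply/andP; split; first lia.
    apply/allP => x /mapP[o]; rewrite mem_iota => /andP[_ ho] ->.
    have ho' : r + o < 6 by lia.
    have /(subsetP SR) : ((Ordinal ho', Ordinal hj) : C) \in S by rewrite eS inE /= ei ej; lia.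
    by rewrite inE /= subnn muln0 addn0 => /andP[].
  - case/orP => [/andP[/eqP-> /andP[hh ok]] | /andP[/eqP-> /andP[hv ok]]].
      apply/andP; split; first (apply/andP; split).
      + apply/existsP; exists (Ordinal hr); apply/existsP; exists (Ordinal hj).
        by rewrite /= /BH eqxx; apply/orP; left; rewrite andbT; apply/andP; split; lia.
      + rewrite inE /=; lia.
      + apply/subsetP => -[a b]; rewrite !inE /= => /andP[/andP[h1 h1'] /andP[h2 h2']].
        have x1 : a = r :> nat by lia.
        apply/andP; split; first lia.
        move/allP: ok => /(_ (a + 6 * (b - j))); apply.
        by rewrite memLH // x1 eqxx /=; lia.
    apply/andP; split; first (apply/andP; split).
    + apply/existsP; exists (Ordinal hr); apply/existsP; exists (Ordinal hj).
      by rewrite /= /BV eqxx; apply/orP; right; rewrite andbT; apply/andP; split; lia.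
    + rewrite inE /=; lia.
    + apply/subsetP => -[a b]; rewrite !inE /= => /andP[/andP[h1 h1'] /andP[h2 h2']].
      have x2 : b = j :> nat by lia.
      apply/andP; split; first lia.
      move/allP: ok => /(_ (a + 6 * (b - j))); apply.
      by rewrite memLV // x2 subnn eqxx /=; lia.
rewrite (@sum2 _ _ BH BV _ _ _ key); last first.
  move=> _ /andP[hv _]; apply/negP => /eqP /setP.
  have hr1 : r.+1 < 6 by lia.
  move=> /(_ ((Ordinal hr1, Ordinal hj) : C)); rewrite !inE /=.
  have -> : (r <= r.+1 < r + 1) = false by lia.
  have -> : (r <= r.+1 < r + 4) = true by lia.
  by rewrite leqnn addn1 ltnSn.
have inv : forall L, r \in L -> all (fun x => x < 24) L ->
    forall i, i < 6 - k -> nth false (setc O L) i.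
  move=> L rL aL i hi; rewrite nth_setc //.
  case: (ltngtP i r) => hir; [by rewrite hO' | lia | by rewrite hir rL orbT].

congr (_ + _).
  case: ifP => // /andP[hh ok].
  have -> : reg j O :\: BH = reg j (setc O (LH r)).
    apply/setP => -[a b]; rewrite !inE /= nth_setc ?allLH //.
    case: (leqP j b) => hb /=; last by rewrite andbF.
    rewrite memLH //.
    case: (a =P r :> nat) => [->|ne] /=; last first.
      have -> : (r <= a < r + 1) = false by lia.
      by rewrite orbF.
    have -> : (r <= r < r + 1) = true by lia.
    case: (ltnP (b - j) 4) => hb4 /=.
      have e : (b < j + 4) = true by lia.
      by rewrite e orbT.
    have e : (b < j + 4) = false by lia.
    by rewrite e orbF.
  apply: IH => //; first lia.
  apply: inv; last exact: allLH.
  by apply/mapP; exists 0; rewrite ?muln0 ?addn0.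
case: ifP => // /andP[hv ok].
have -> : reg j O :\: BV = reg j (setc O (LV r)).
  apply/setP => -[a b]; rewrite !inE /= nth_setc ?allLV //.
  case: (leqP j b) => hb /=; last by rewrite andbF.
  rewrite memLV //.
  case: (b - j =P 0) => [e|ne] /=.
    have e' : (b < j + 1) = true by lia.
    by rewrite e' andbT negb_or andbC.
  have e' : (b < j + 1) = false by lia.
  by rewrite e' andbF orbF.
apply: IH => //; first lia.
apply: inv; last exact: allLV.
by apply/mapP; exists 0; rewrite ?addn0.
Qed.


End Rect.

Section R2.
Variable n : nat.
Notation C := (cell 6 n).
Notation tl := (@tl n).
Lemma regB k j O : j + k = n -> #|Til tl (reg n j O)| = g k O.
Proof.
elim: k j O => [|k IH] j O e.
  have -> : reg n j O = set0.
    apply/setP => -[a b]; rewrite !inE /=; apply/negP => /andP[h _].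
    by have := leq_ltn_trans h (ltn_ord b); rewrite -e addn0 ltnn.
  exact: Til0.
have hj : j < n by rewrite -e -addSnnS leq_addr.
rewrite (@plA n 6 j O hj (leqnn 6)); last by move=> i; rewrite subnn.
change (g k.+1 O) with (sumn (map (g k) (step (4 <= k.+1) O))).
rewrite /step -map_comp; have -> : n - j = k.+1 by rewrite -e addKn.
congr sumn; apply: eq_map => O' /=; apply: IH; by rewrite addSnnS.
Qed.
Lemma Til_full : #|Til tl [set: C]| = g n [::].
Proof.
rewrite -(@regB n 0 [::]) //; congr (#|Til tl _|).
by apply/setP => c; rewrite !inE nth_nil.
Qed.

Lemma card_int m i h : i + h <= m -> #|[set x : 'I_m | i <= x < i + h]| = h.
Proof.
move=> H.
have lt : forall k : 'I_h, i + k < m by move=> k; rewrite (leq_trans _ H) // ltn_add2l ltn_ord.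
pose f (k : 'I_h) : 'I_m := Ordinal (lt k).
have -> : [set x : 'I_m | i <= x < i + h] = f @: [set: 'I_h].
  apply/setP => x; rewrite inE; apply/andP/imsetP => [[h1 h2]|[k _ ->]] /=.
    have hk : x - i < h by lia.
    exists (Ordinal hk); rewrite ?inE //; apply/val_inj => /=; lia.
  split; [exact: leq_addr | by rewrite ltn_add2l].
rewrite card_imset ?cardsT ?card_ord // => a b /(congr1 val) /= /addnI; exact: val_inj.
Qed.

Lemma card_block i j h w : i + h <= 6 -> j + w <= n -> #|@block 6 n i j h w| = h * w.
Proof.
move=> hi hj.
have -> : @block 6 n i j h w = setX [set x : 'I_6 | i <= x < i + h] [set y : 'I_n | j <= y < j + w].
  by apply/setP => -[a b]; rewrite !inE.
by rewrite cardsX !card_int.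
Qed.

Lemma card_tile S : tl S -> #|S| = 4.
Proof.
rewrite /tl /is_tile => /existsP[i /existsP[j /orP[/andP[/andP[hi hj] /eqP->]|/andP[/andP[hi hj] /eqP->]]]].
  by rewrite card_block.
by rewrite card_block.
Qed.

Lemma ntil_g N : N.*2 = 3 * n -> ntilings 1 4 6 n N = g n [::].
Proof.
move=> e; rewrite /ntilings -Til_full; apply: eq_card => P; rewrite !inE /is_tiling.
rewrite /tl.
case: (boolP (partition P [set: C])) => pP //=.
case: (boolP [forall S in P, is_tile 1 4 S]) => tP //=; rewrite ?andbF //.
move/forall_inP: tP => tP. rewrite -muln2 in e.
have := card_partition pP; rewrite cardsT card_prod !card_ord.
rewrite (eq_bigr (fun _ => 4)); last by move=> S /tP; exact: card_tile.
rewrite sum_nat_const => e2; apply/eqP. have h4 : #|P| * 4 = N * 4 by rewrite -e2 (_ : 6 = 2 * 3) // -mulnA -e mulnC -mulnA. by move/eqP: h4; rewrite eqn_pmul2r // => /eqP.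
Qed.
End R2.

Definition Sts : seq (seq bool) :=
[:: [:: true; true; true; true; true; true; true; true; false; false; false; false; true; true; false; false; false; false];
  [:: true; true; true; true; true; true; true; true; true; true; true; true; true; true; false; false; false; false];
  [:: true; true; true; true; true; true; true; false; false; false; false; true; true; false; false; false; false; true];
  [:: true; true; true; true; true; true; true; true; true; true; true; true; true; false; false; false; false; true];
  [:: true; true; true; true; true; true; false; false; false; false; true; true; false; false; false; false; true; true];
  [:: true; true; true; true; true; true; true; true; true; true; true; true; false; false; false; false; true; true];
  [:: true; true; true; true; true; true; true; true; true; true; true; true; true; true; true; true; true; true];
  [:: true; true; false; false; false; false; true; true; false; false; false; false; true; true; false; false; false; false];
  [:: true; false; false; false; false; true; true; false; false; false; false; true; true; false; false; false; false; true];
  [:: false; false; false; false; true; true; false; false; false; false; true; true; false; false; false; false; true; true];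
  [:: true; true; false; false; false; false; true; true; false; false; false; false];
  [:: true; true; true; true; true; true; true; true; false; false; false; false];
  [:: true; false; false; false; false; true; true; false; false; false; false; true];
  [:: true; true; true; true; true; true; true; false; false; false; false; true];
  [:: false; false; false; false; true; true; false; false; false; false; true; true];
  [:: true; true; true; true; true; true; false; false; false; false; true; true];
  [:: true; true; true; true; true; true; true; true; true; true; true; true];
  [:: true; true; true; true; true; true; true; true; true; true; true; true; false; false; true; true; true; true];
  [:: true; true; false; false; false; false; true; true; false; false; false; false; false; false; false; false; false; false];
  [:: true; true; true; true; true; true; true; true; true; true; true; true; false; true; true; true; true; false];
  [:: true; false; false; false; false; true; true; false; false; false; false; true; false; false; false; false; false; false];
  [:: true; true; true; true; true; true; true; true; true; true; true; true; true; true; true; true; false; false];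
  [:: false; false; false; false; true; true; false; false; false; false; true; true; false; false; false; false; false; false];
  [:: true; true; false; false; false; false];
  [:: true; false; false; false; false; true];
  [:: false; false; false; false; true; true];
  [:: true; true; true; true; true; true];
  [:: true; true; true; true; true; true; false; false; true; true; true; true];
  [:: true; true; true; true; true; true; false; false; true; true; true; true; false; false; true; true; true; true];
  [:: true; true; false; false; false; false; false; false; false; false; false; false; false; false; false; false; false; false];
  [:: true; true; true; true; true; true; false; true; true; true; true; false];
  [:: true; true; true; true; true; true; false; true; true; true; true; false; false; true; true; true; true; false];
  [:: true; false; false; false; false; true; false; false; false; false; false; false; false; false; false; false; false; false];
  [:: true; true; true; true; true; true; true; true; true; true; false; false];
  [:: true; true; true; true; true; true; true; true; true; true; false; false; true; true; true; true; false; false];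
  [:: false; false; false; false; true; true; false; false; false; false; false; false; false; false; false; false; false; false];
  [::];
  [:: false; false; true; true; true; true];
  [:: false; false; true; true; true; true; false; false; true; true; true; true];
  [:: false; false; true; true; true; true; false; false; true; true; true; true; false; false; true; true; true; true];
  [:: false; true; true; true; true; false];
  [:: false; true; true; true; true; false; false; true; true; true; true; false];
  [:: false; true; true; true; true; false; false; true; true; true; true; false; false; true; true; true; true; false];
  [:: true; true; true; true; false; false];
  [:: true; true; true; true; false; false; true; true; true; true; false; false];
  [:: true; true; true; true; false; false; true; true; true; true; false; false; true; true; true; true; false; false];
  [:: false; false; false; false; false; false; false; false; false; false; false; false; false; false; false; false; false; false]].
Definition nS := 47.
Definition st i := nth [::] Sts i.
Definition Succ : seq (seq nat) :=
[:: [:: 10]; [:: 11]; [:: 12]; [:: 13]; [:: 14]; [:: 15]; [:: 16]; [:: 17; 18]; [:: 19; 20]; [:: 21; 22]; [:: 28; 29]; [:: 23]; [:: 31; 32]; [:: 24]; [:: 34; 35]; [:: 25]; [:: 26]; [:: 27]; [:: 28; 29]; [:: 30]; [:: 31; 32]; [:: 33]; [:: 34; 35]; [:: 39; 46]; [:: 42; 46]; [:: 45; 46]; [:: 36]; [:: 37]; [:: 38]; [:: 39; 46]; [:: 40]; [:: 41]; [:: 42; 46]; [:: 43]; [:: 44]; [:: 45; 46]; [:: 6; 7; 8; 9]; [:: 7]; [:: 0]; [:: 1]; [:: 8]; [:: 2]; [:: 3]; [:: 9]; [:: 4]; [:: 5]; [:: 6; 7; 8; 9]].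
Definition G3 : seq nat := [:: 1; 1; 1; 1; 1; 1; 1; 1; 1; 1; 0; 0; 0; 0; 0; 0; 0; 0; 0; 0; 0; 0;
  0; 0; 0; 0; 0; 0; 0; 0; 0; 0; 0; 0; 0; 0; 0; 0; 0; 0; 0; 0; 0; 0; 0; 0; 0].

Lemma Succ_ok : [seq map (index^~ Sts) (step true s) | s <- Sts] == Succ.
Proof. vm_compute. reflexivity. Qed.
Lemma Sts_closed : all (fun s => all (fun y => y \in Sts) (step true s)) Sts.
Proof. vm_compute. reflexivity. Qed.
Lemma G3_ok : [seq g 3 (st i) | i <- iota 0 nS] == G3.
Proof. vm_compute. reflexivity. Qed.
Lemma size_Sts : size Sts = nS.
Proof. by []. Qed.
Lemma Succ_lt : all (all (fun y => y < nS)) Succ.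
Proof. by []. Qed.
Lemma size_Succ : size Succ = nS.
Proof. by []. Qed.
Lemma nil_st : st 36 = [::].
Proof. by []. Qed.

Lemma stepS i : i < nS -> step true (st i) = map st (nth [::] Succ i).
Proof.
move=> hi; rewrite -(eqP Succ_ok) (nth_map [::]) ?size_Sts // -map_comp.
rewrite -[LHS]map_id; apply/eq_in_map => y yS /=; rewrite /st nth_index //.
have := allP Sts_closed (st i) (mem_nth [::] _); rewrite size_Sts => /(_ hi) /allP; apply.
exact: yS.
Qed.

Lemma sum_list (f : nat -> nat) l : all (fun y => y < nS) l ->
  sumn (map f l) = \sum_(0 <= x < nS) count_mem x l * f x.
Proof.
elim: l => [|y l IH] /=; first by rewrite big1.
move=> /andP[yS aS]; rewrite IH //.
under [X in _ = X]eq_bigr do rewrite mulnDl.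
rewrite big_split; congr (_ + _).
rewrite (bigD1_seq y) ?iota_uniq ?mem_iota // eqxx mul1n big1; first exact: (esym (addn0 _)).
by move=> x /negbTE; rewrite eq_sym => ->.
Qed.

Lemma gS k x : g k.+1 x = sumn (map (g k) (step (4 <= k.+1) x)).
Proof. by []. Qed.

Fixpoint rvl (j : nat) : seq nat :=
  match j with
  | 0 => [seq nat_of_bool (i == 36) | i <- iota 0 nS]
  | j'.+1 => let v := rvl j' in
      [seq sumn [seq count_mem y (nth [::] Succ i) * nth 0 v i | i <- iota 0 nS] | y <- iota 0 nS]
  end.
Definition rv j i := nth 0 (rvl j) i.

Lemma rvl0 : rvl 0 = [seq nat_of_bool (i == 36) | i <- iota 0 nS].
Proof. by []. Qed.
Lemma rvlS j : rvl j.+1 =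
  [seq sumn [seq count_mem y (nth [::] Succ i) * rv j i | i <- iota 0 nS] | y <- iota 0 nS].
Proof. by []. Qed.

Lemma rv0 i : i < nS -> rv 0 i = (i == 36).
Proof. by move=> hi; rewrite /rv rvl0 (nth_map 0) ?size_iota // nth_iota. Qed.

Lemma rvS j y : y < nS -> rv j.+1 y = \sum_(0 <= i < nS) count_mem y (nth [::] Succ i) * rv j i.
Proof.
move=> hy; rewrite {1}/rv rvlS (nth_map 0) ?size_iota // nth_iota // add0n.
by rewrite sumnE big_map.
Qed.

Lemma lemR j k : 3 <= k -> g (k + j) [::] = \sum_(0 <= i < nS) rv j i * g k (st i).
Proof.
elim: j k => [|j IH] k hk.
  rewrite addn0 (bigD1_seq 36) ?iota_uniq ?mem_iota // rv0 // eqxx mul1n nil_st.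
  rewrite big1_seq; first exact: (esym (addn0 _)).
  by move=> x /andP[nx]; rewrite mem_iota => /andP[_ xS]; rewrite rv0 // (negbTE nx).
rewrite -addSnnS IH //; last exact: ltnW.
transitivity (\sum_(0 <= x < nS) rv j x * \sum_(0 <= y < nS) count_mem y (nth [::] Succ x) * g k (st y)).
  apply: eq_big_seq => x; rewrite mem_iota add0n => /andP[_ xS]; congr (_ * _).
  rewrite gS (_ : (4 <= k.+1) = true) // stepS // -map_comp.
  rewrite (sum_list (fun y => g k (st y))) //.
  apply: (allP Succ_lt); apply: mem_nth; by rewrite size_Succ.
under eq_bigr do rewrite big_distrr.
rewrite exchange_big; apply: eq_big_seq => y; rewrite mem_iota add0n => /andP[_ yS].
rewrite rvS // big_distrl; apply: eq_bigr => x _ /=.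
by rewrite mulnCA mulnA.
Qed.

Lemma rv_id' : (let v16 := rvl 16 in let v12 := rvl 12 in let v8 := rvl 8 in
  let v4 := rvl 4 in let v0 := rvl 0 in
  all (fun i => nth 0 v16 i + 6 * nth 0 v8 i + nth 0 v0 i == 7 * nth 0 v12 i + 4 * nth 0 v4 i)
    (iota 0 nS)) = true.
Proof. vm_compute. reflexivity. Qed.

Lemma rv_id i : i < nS -> rv 16 i + 6 * rv 8 i + rv 0 i = 7 * rv 12 i + 4 * rv 4 i.
Proof.
move=> hi; have H := rv_id'; cbv zeta in H.
by apply/eqP; move/allP: H => /(_ i); apply; rewrite mem_iota.
Qed.

Lemma comb (F1 F2 F3 G1 G2 a : nat -> nat) :
  (forall x, x < nS -> F1 x + 6 * F2 x + F3 x = 7 * G1 x + 4 * G2 x) ->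
  \sum_(0 <= x < nS) F1 x * a x + 6 * (\sum_(0 <= x < nS) F2 x * a x) + \sum_(0 <= x < nS) F3 x * a x =
  7 * (\sum_(0 <= x < nS) G1 x * a x) + 4 * (\sum_(0 <= x < nS) G2 x * a x).
Proof.
move=> H; rewrite !big_distrr -!big_split /=.
apply: eq_big_seq => x; rewrite mem_iota add0n => /andP[_ xS].
by rewrite !mulnA -!mulnDl H // mulnDl.
Qed.

Lemma grec k : 3 <= k ->
  g (k + 16) [::] + 6 * g (k + 8) [::] + g (k + 0) [::] =
  7 * g (k + 12) [::] + 4 * g (k + 4) [::].
Proof.
move=> hk; rewrite !lemR //; apply: comb => x xS; exact: rv_id.
Qed.

Definition avals := [:: 1; 0; 0; 0; 4; 0; 0; 0; 25; 0; 0; 0; 154; 0; 0; 0; 943; 0; 0].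

Definition acomp n := if n < 3 then g n [::] else
  let v := rvl (n - 3) in sumn [seq nth 0 v i * nth 0 G3 i | i <- iota 0 nS].

Lemma acomp_ok : [seq acomp n | n <- iota 0 19] == avals.
Proof. vm_compute. reflexivity. Qed.

Lemma g_acomp n : g n [::] = acomp n.
Proof.
rewrite /acomp; case: ltnP => // hn; cbv zeta.
have -> : n = 3 + (n - 3) by rewrite subnKC.
rewrite lemR // addKn sumnE big_map; apply: eq_big_seq => i.
rewrite mem_iota add0n => /andP[_ hi]; congr (_ * _).
rewrite -(eqP G3_ok) (nth_map 0) ?size_iota // nth_iota //.
Qed.

Lemma g_small n : n < 19 -> g n [::] = nth 0 avals n.
Proof.
move=> hn; rewrite g_acomp -(eqP acomp_ok) (nth_map 0) ?size_iota // nth_iota //.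
Qed.

Import GRing.Theory.

Definition Tc (M : nat) : nat := if 3 %| M then g ((M %/ 3).*2) [::] else 0.

Lemma T_eq M : T14_6 M = Tc M.
Proof.
rewrite /T14_6 /Tc -mul2n Gauss_dvdr //.
case: ifP => // h.
have e : (2 * M) %/ 3 = (M %/ 3).*2 by rewrite -muln_divA // mul2n.
rewrite e ntil_g //; lia.
Qed.

Lemma arec n : 16 <= n ->
  g n [::] + 6 * g (n - 8) [::] + g (n - 16) [::] = 7 * g (n - 4) [::] + 4 * g (n - 12) [::].
Proof.
move=> h2; case: (ltnP n 19) => h1.
  have [->|[->|->]] : n = 16 \/ n = 17 \/ n = 18 by lia.
  - by rewrite !g_small.
  - by rewrite !g_small.
  - by rewrite !g_small.
set k := n - 16.
have hn : n = k + 16 by rewrite /k subnK.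
have hk : 3 <= k by rewrite /k; lia.
rewrite hn.
have -> : k + 16 - 8 = k + 8 by lia.
have -> : k + 16 - 4 = k + 12 by lia.
have -> : k + 16 - 12 = k + 4 by lia.
have G := grec hk; rewrite addn0 in G; exact: G.
Qed.

Local Open Scope ring_scope.

Definition dc (i : nat) : int :=
  (i == 0%N)%:R - 7 * (i == 6%N)%:R + 6 * (i == 12%N)%:R - 4 * (i == 18%N)%:R + (i == 24%N)%:R.
Definition nc (i : nat) : int :=
  (i == 0%N)%:R - (i == 6%N)%:R *+ 3 + (i == 12%N)%:R *+ 3 - (i == 18%N)%:R.

Lemma num_eq : numer = 1 - 'X^6 *+ 3 + 'X^12 *+ 3 - 'X^18.
Proof. rewrite /numer.
have e12 : 'X^12 = ('X^6 : {poly int}) ^+ 2 by rewrite -exprM.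
have e18 : 'X^18 = ('X^6 : {poly int}) ^+ 3 by rewrite -exprM.
rewrite e12 e18; move: ('X^6 : {poly int}) => x.
ring.
Qed.
Lemma cn i : numer`_i = nc i.
Proof. by rewrite num_eq !coefE. Qed.
Lemma cd i : denom`_i = dc i.
Proof. by rewrite /denom !coefE. Qed.

Lemma sum_foldr (F : nat -> int) n :
  \sum_(i < n) F i = foldr (fun i a => F i + a) 0 (iota 0 n).
Proof.
rewrite -(big_mkord xpredT F) /index_iota subn0.
by elim: (iota 0 n) => [|x s IH]; rewrite ?big_nil // big_cons IH.
Qed.

Definition Tcs (M : nat) : nat := if (3 %| M)%N then nth 0%N avals ((M %/ 3).*2) else 0%N.

Lemma Tc_small M : (M < 24)%N -> Tc M = Tcs M.
Proof. by move=> hM; rewrite /Tc /Tcs; case: ifP => // _; apply: g_small; lia. Qed.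

Lemma small : all (fun N => foldr (fun i a => dc i * (Tcs (N - i))%:Z + a) 0 (iota 0 N.+1) == nc N)
  (iota 0 24).
Proof. vm_compute. reflexivity. Qed.

Lemma sum25 (f : nat -> int) :
  \sum_(i < 25) dc i * f i = f 0%N - 7 * f 6%N + 6 * f 12%N - 4 * f 18%N + f 24%N.
Proof. rewrite !big_ord_recr big_ord0 /= /dc /=. ring. Qed.

Theorem mainTheorem5 :
  forall N : nat,
    \sum_(i < N.+1) denom`_i * ((T14_6 (N - i)%N)%:Z) = numer`_N.
Proof.
move=> N; rewrite cn.
under eq_bigr do rewrite cd T_eq.
case: (ltnP N 24) => hN.
  rewrite (eq_bigr (fun i : 'I_N.+1 => dc i * (Tcs (N - i))%:Z)); last first.
    by move=> i _; rewrite Tc_small // (leq_ltn_trans (leq_subr _ _) hN).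
  rewrite (sum_foldr (fun i => dc i * (Tcs (N - i))%:Z)).
  apply/eqP; move/allP: small => /(_ N); apply; rewrite mem_iota; lia.
rewrite -(big_mkord xpredT (fun i => dc i * (Tc (N - i))%:Z)).
rewrite (big_cat_nat (n := 25)) //=.
rewrite [X in _ + X]big1_seq; last first.
  move=> i /andP[_]; rewrite mem_iota => /andP[h _]; rewrite /dc !gtn_eqF ?(leq_trans _ h) //=; ring.
rewrite addr0 big_mkord (sum25 (fun i => (Tc (N - i))%:Z)) /= subn0.
have -> : nc N = 0.
  by rewrite /nc !gtn_eqF ?(leq_trans _ hN) //=; ring.
rewrite /Tc.
case h3: (3 %| N)%N.
  have d6 : forall k, (6 * k <= N)%N -> (3 %| N - 6 * k)%N.
    by move=> k hk; rewrite dvdn_sub // dvdn_mulr.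
  rewrite (d6 1%N) ?(d6 2%N) ?(d6 3%N) ?(d6 4%N) //; try lia.
  set m := (N %/ 3)%N.
  have e1 : (((N - 6) %/ 3).*2 = m.*2 - 4)%N by rewrite /m; lia.
  have e2 : (((N - 12) %/ 3).*2 = m.*2 - 8)%N by rewrite /m; lia.
  have e3 : (((N - 18) %/ 3).*2 = m.*2 - 12)%N by rewrite /m; lia.
  have e4 : (((N - 24) %/ 3).*2 = m.*2 - 16)%N by rewrite /m; lia.
  rewrite e1 e2 e3 e4.
  have hm : (16 <= m.*2)%N by rewrite /m; lia.
  have A := @arec m.*2 hm.
  move: A; set a := g m.*2 [::]; set b := g (m.*2 - 4) [::]; set c := g (m.*2 - 8) [::];
    set d := g (m.*2 - 12) [::]; set e := g (m.*2 - 16) [::] => A.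
  have A' := congr1 (fun x : nat => x%:Z) A; rewrite /= ?PoszD ?PoszM in A'.

  lia.
have n6 : forall k, (6 * k <= N)%N -> (3 %| N - 6 * k)%N = false.
  move=> k hk; apply/negP => h; move/negP: h3; apply.
  by rewrite -(subnK hk) dvdn_add // dvdn_mulr.
rewrite (n6 1%N) ?(n6 2%N) ?(n6 3%N) ?(n6 4%N) //; try lia.
Qed.
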